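(* If $\mathcal{L}$ has finite signature, then the $n$-bisimulation topology $\mathcal{T}_{B}$ is the Stone(-like) topology $\mathcal{T}_{\boldsymbol{\mathcal{L}}_{\Lambda}}$ on $\boldsymbol{X}_{\boldsymbol{\mathcal{L}}_{\Lambda}}$.
   Context: $\mathcal{L}$ is the basic modal language over a countable non-empty set of atoms $\Phi$ and a countable non-empty set of operator indices $\mathcal{I}$ (finite signature: both $\Phi$ and $\mathcal{I}$ finite). $X$ is a set of pointed Kripke models for which modal equivalence and bisimilarity coincide (e.g. image-finite models), and $\Lambda$ is a normal modal logic sound with respect to $X$. $\boldsymbol{X}_{\boldsymbol{\mathcal{L}}_{\Lambda}}$ is the quotient of $X$ under $\Lambda$-equivalence (models identified iff they satisfy the same formulas). The Stone(-like) topology $\mathcal{T}_{\boldsymbol{\mathcal{L}}_{\Lambda}}$ has as basis the sets $\{\boldsymbol{x}\colon x\models\varphi\}$ for $\varphi\in\mathcal{L}$. Writing $x\,\underline{\leftrightarrow}_{n}\,y$ for ''$x$ and $y$ are $n$-bisimilar'', the $n$-bisimulation metric is $d_{B}(\boldsymbol{x},\boldsymbol{y})=0$ if $x\,\underline{\leftrightarrow}_{n}\,y$ for all $n$, and $d_{B}(\boldsymbol{x},\boldsymbol{y})=\frac{1}{n}$ for the least $n$ with $x$ and $y$ not $n$-bisimilar; the $n$-bisimulation topology $\mathcal{T}_{B}$ is its metric topology, with basis the sets $B_{\boldsymbol{x}n}=\{\boldsymbol{y}\colon y\,\underline{\leftrightarrow}_{n}\,x\}$. *)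

(* Defs.v *)
From mathcomp Require Import all_boot.
Set Implicit Arguments.
Unset Strict Implicit.
Unset Printing Implicit Defensive.

Section Modal.
Variables (Phi I : Type).

Inductive form : Type :=
| Var : Phi -> form
| Bot : form
| Imp : form -> form -> form
| Box : I -> form -> form.

Record kmodel : Type := KModel {
  world : Type;
  rel : I -> world -> world -> Prop;
  val : Phi -> world -> Prop }.
Arguments rel : clear implicits.
Arguments val : clear implicits.

Definition pointed : Type := { M : kmodel & world M }.

Fixpoint sat (M : kmodel) (w : world M) (f : form) : Prop :=
  match f with
  | Var p => val M p w
  | Bot => False
  | Imp f g => sat w f -> sat w g
  | Box i f => forall v, rel M i w v -> sat v f
  end.

Definition psat (x : pointed) (f : form) : Prop := sat (projT2 x) f.

Definition modeq (x y : pointed) : Prop := forall f, psat x f <-> psat y f.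

Definition bisimilar (x y : pointed) : Prop :=
  exists Z : world (projT1 x) -> world (projT1 y) -> Prop,
    Z (projT2 x) (projT2 y) /\
    (forall u v, Z u v ->
       (forall p, val (projT1 x) p u <-> val (projT1 y) p v) /\
       (forall i u', rel (projT1 x) i u u' -> exists v', rel (projT1 y) i v v' /\ Z u' v') /\
       (forall i v', rel (projT1 y) i v v' -> exists u', rel (projT1 x) i u u' /\ Z u' v')).

Fixpoint nbisimw (n : nat) (M N : kmodel) (u : world M) (v : world N) : Prop :=
  (forall p, val M p u <-> val N p v) /\
  match n with
  | 0 => True
  | S m =>
      (forall i u', rel M i u u' -> exists v', rel N i v v' /\ nbisimw m u' v') /\
      (forall i v', rel N i v v' -> exists u', rel M i u u' /\ nbisimw m u' v')
  end.

Definition nbisim (n : nat) (x y : pointed) : Prop := nbisimw n (projT2 x) (projT2 y).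

Fixpoint peval (v : form -> Prop) (f : form) : Prop :=
  match f with
  | Var p => v (Var p)
  | Bot => False
  | Imp f g => peval v f -> peval v g
  | Box i g => v (Box i g)
  end.

Definition tautology (f : form) : Prop := forall v, peval v f.

Fixpoint subst (s : Phi -> form) (f : form) : form :=
  match f with
  | Var p => s p
  | Bot => Bot
  | Imp f g => Imp (subst s f) (subst s g)
  | Box i g => Box i (subst s g)
  end.

Definition normal_logic (L : form -> Prop) : Prop :=
  (forall f, tautology f -> L f) /\
  (forall i f g, L (Imp (Box i (Imp f g)) (Imp (Box i f) (Box i g)))) /\
  (forall f g, L (Imp f g) -> L f -> L g) /\
  (forall s f, L f -> L (subst s f)) /\
  (forall i f, L f -> L (Box i f)).

Definition sound_wrt (L : form -> Prop) (X : pointed -> Prop) : Prop :=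
  forall f, L f -> forall x, X x -> psat x f.

(* The quotient of X under L-equivalence (identify x,y iff they satisfy the
   same formulas): the type of equivalence classes. *)
Definition quot (X : pointed -> Prop) : Type :=
  { C : pointed -> Prop | exists x, X x /\ C = (fun y => X y /\ modeq x y) }.

Definition gen_open (T : Type) (B : (T -> Prop) -> Prop) (U : T -> Prop) : Prop :=
  forall t, U t -> exists b, B b /\ b t /\ (forall s, b s -> U s).

Definition stone_basis (X : pointed -> Prop) (b : quot X -> Prop) : Prop :=
  exists f, b = (fun c => exists y, proj1_sig c y /\ psat y f).

Definition bisim_basis (X : pointed -> Prop) (b : quot X -> Prop) : Prop :=
  exists x n, X x /\ b = (fun c => exists y, proj1_sig c y /\ nbisim n y x).

Definition stone_open (X : pointed -> Prop) := gen_open (@stone_basis X).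
Definition bisim_open (X : pointed -> Prop) := gen_open (@bisim_basis X).

End Modal.

(* Main.v *)
Require Import Defs.
From mathcomp Require Import all_boot.
From Stdlib Require Import Classical ClassicalEpsilon.

Definition Neg {Phi I : Type} (f : form Phi I) := Imp f (Bot Phi I).
Definition Top {Phi I : Type} : form Phi I := Imp (Bot Phi I) (Bot Phi I).
Definition And {Phi I : Type} (f g : form Phi I) := Neg (Imp f (Neg g)).
Definition Or {Phi I : Type} (f g : form Phi I) := Imp (Neg f) g.
Definition Dia {Phi I : Type} (i : I) (f : form Phi I) := Neg (Box i (Neg f)).

Section S.
Lemma sat_And {Phi I : Type} (M : kmodel Phi I) (w : world M) f g :
  sat w (And f g) <-> sat w f /\ sat w g.
Proof. simpl; split; [intro H; split; apply NNPP; tauto | tauto]. Qed.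
Lemma sat_Or {Phi I : Type} (M : kmodel Phi I) (w : world M) f g :
  sat w (Or f g) <-> sat w f \/ sat w g.
Proof. simpl; split; [intro H; destruct (classic (sat w f)); tauto | tauto]. Qed.
Lemma sat_Neg {Phi I : Type} (M : kmodel Phi I) (w : world M) f :
  sat w (Neg f) <-> ~ sat w f.
Proof. simpl; tauto. Qed.
Lemma sat_Dia {Phi I : Type} (M : kmodel Phi I) (w : world M) i f :
  sat w (Dia i f) <-> exists v, Defs.rel i w v /\ sat v f.
Proof. simpl; split.
- intro H; apply NNPP; intro H'; apply H; intros v Hv Hf; apply H'; eauto.
- intros [v [Hv Hf]] H; exact (H v Hv Hf).
Qed.

Definition BigAnd {Phi I : Type} {T : Type} (g : T -> form Phi I) (s : seq T) :=
  foldr (fun x acc => And (g x) acc) Top s.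
Definition BigOr {Phi I : Type} {T : Type} (g : T -> form Phi I) (s : seq T) :=
  foldr (fun x acc => Or (g x) acc) (Bot Phi I) s.

Lemma sat_BigAnd {Phi I : Type} {T : eqType} (M : kmodel Phi I) (w : world M) g (s : seq T) :
  sat w (BigAnd g s) <-> (forall x, x \in s -> sat w (g x)).
Proof.
elim: s => [|y s IH]; first by split => [_ x|_ /= //]; rewrite in_nil.
change (sat w (And (g y) (BigAnd g s)) <-> (forall x, x \in y :: s -> sat w (g x))); rewrite sat_And IH; split.
- move=> [H1 H2] x; rewrite in_cons => /orP [/eqP -> //|]; exact: H2.
- move=> H; split; first by apply: H; rewrite mem_head.
  by move=> x Hx; apply: H; rewrite in_cons Hx orbT.
Qed.

Lemma sat_BigOr {Phi I : Type} {T : eqType} (M : kmodel Phi I) (w : world M) g (s : seq T) :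
  sat w (BigOr g s) <-> (exists x, x \in s /\ sat w (g x)).
Proof.
elim: s => [|y s IH]; first by split => // [[x]]; rewrite in_nil; case.
change (sat w (Or (g y) (BigOr g s)) <-> (exists x, x \in y :: s /\ sat w (g x))); rewrite sat_Or IH; split.
- move=> [H|[x [Hx H]]]; first by exists y; rewrite mem_head.
  by exists x; rewrite in_cons Hx orbT.
- move=> [x [Hx H]]; move: Hx; rewrite in_cons => /orP [/eqP Ex|Hx].
  + by left; rewrite -Ex.
  + by right; exists x.
Qed.
End S.

Fixpoint ntype (Phi I : finType) (n : nat) : finType :=
  match n with
  | 0 => {ffun Phi -> bool}
  | m.+1 => ({ffun Phi -> bool} * {ffun I -> {ffun ntype Phi I m -> bool}})%type
  end.

Definition lit {Phi I : finType} (a : {ffun Phi -> bool}) (p : Phi) : form Phi I :=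
  if a p then Var I p else Neg (Var I p).
Definition atoms {Phi I : finType} (a : {ffun Phi -> bool}) : form Phi I :=
  BigAnd (lit a) (enum Phi).

Fixpoint chi (Phi I : finType) (n : nat) : ntype Phi I n -> form Phi I :=
  match n return ntype Phi I n -> form Phi I with
  | 0 => fun a => atoms a
  | m.+1 => fun tr =>
      And (atoms tr.1)
        (BigAnd (fun i => And (Box i (BigOr (chi Phi I m) [seq t <- enum (ntype Phi I m) | tr.2 i t]))
                             (BigAnd (fun t => Dia i (chi Phi I m t)) [seq t <- enum (ntype Phi I m) | tr.2 i t]))
           (enum I))
  end.

Lemma sat_atoms {Phi I : finType} (M : kmodel Phi I) (w : world M) a :
  sat w (atoms a) <-> forall p, (Defs.val p w <-> a p).
Proof.
rewrite /atoms sat_BigAnd; split.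
- move=> H p; move: (H p); rewrite mem_enum /lit => /(_ isT).
  by case: (a p) => /= Hs; split => // Hv; exfalso; apply: Hs.
- move=> H p _; move: (H p); rewrite /lit; case: (a p) => /= [[_ H'] | [Hv _] Hv']; [exact: H' | by have := Hv Hv'].
Qed.

Lemma sat_chiS {Phi I : finType} (M : kmodel Phi I) (w : world M) m (tr : ntype Phi I m.+1) :
  sat w (chi Phi I m.+1 tr) <->
  (forall p, Defs.val p w <-> tr.1 p) /\
  (forall i, (forall v, Defs.rel i w v -> exists t, tr.2 i t /\ sat v (chi Phi I m t)) /\
             (forall t, tr.2 i t -> exists v, Defs.rel i w v /\ sat v (chi Phi I m t))).
Proof.
rewrite (_ : chi Phi I m.+1 tr = (And (atoms tr.1)
        (BigAnd (fun i => And (Box i (BigOr (chi Phi I m) [seq t <- enum (ntype Phi I m) | tr.2 i t]))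
                             (BigAnd (fun t => Dia i (chi Phi I m t)) [seq t <- enum (ntype Phi I m) | tr.2 i t]))
           (enum I))) ); last by [].
rewrite sat_And sat_atoms sat_BigAnd.
have E : forall i, sat w (And (Box i (BigOr (chi Phi I m) [seq t <- enum (ntype Phi I m) | tr.2 i t]))
                             (BigAnd (fun t => Dia i (chi Phi I m t)) [seq t <- enum (ntype Phi I m) | tr.2 i t]))
  <-> (forall v, Defs.rel i w v -> exists t, tr.2 i t /\ sat v (chi Phi I m t)) /\
             (forall t, tr.2 i t -> exists v, Defs.rel i w v /\ sat v (chi Phi I m t)).
  move=> i; rewrite sat_And sat_BigAnd; split.
  - move=> [H1 H2]; split.
    + move=> v Hv; have [t [Ht Hs]] : exists x, x \in [seq t <- enum (ntype Phi I m) | tr.2 i t] /\ sat v (chi Phi I m x) by apply/sat_BigOr; exact: H1.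
      by exists t; move: Ht; rewrite mem_filter => /andP [-> _].
    + move=> t Ht; rewrite -sat_Dia; apply: H2; by rewrite mem_filter Ht mem_enum.
  - move=> [H1 H2]; split.
    + move=> v Hv; rewrite sat_BigOr; have [t [Ht Hs]] := H1 v Hv.
      by exists t; rewrite mem_filter Ht mem_enum.
    + move=> t; rewrite mem_filter => /andP [Ht _]; rewrite sat_Dia; exact: H2.
split.
- move=> [H1 H2]; split => // i; apply/E; apply: H2; by rewrite mem_enum.
- move=> [H1 H2]; split => // i _; apply/E; exact: H2.
Qed.

Definition dec (P : Prop) : bool := if excluded_middle_informative P then true else false.
Lemma decP (P : Prop) : dec P <-> P.
Proof. rewrite /dec; case: excluded_middle_informative => //. Qed.

Lemma chi_exists {Phi I : finType} n (M : kmodel Phi I) (w : world M) :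
  exists t, sat w (chi Phi I n t).
Proof.
elim: n M w => [|m IH] M w.
- exists [ffun p => dec (Defs.val p w)]; rewrite /= sat_atoms => p; rewrite ffunE decP; tauto.
- exists ([ffun p => dec (Defs.val p w)],
          [ffun i => [ffun t => dec (exists v, Defs.rel i w v /\ sat v (chi Phi I m t))]]).
  rewrite sat_chiS /=; split; first by move=> p; rewrite ffunE decP; tauto.
  move=> i; split.
  + move=> v Hv; have [t Ht] := IH M v; exists t; rewrite !ffunE; split => //.
    apply/decP; eauto.
  + by move=> t; rewrite !ffunE => /decP.
Qed.

Lemma chi_nbisim {Phi I : finType} n (M N : kmodel Phi I) (u : world M) (v : world N) t :
  sat u (chi Phi I n t) -> sat v (chi Phi I n t) -> nbisimw n u v.
Proof.
elim: n M N u v t => [|m IH] M N u v t.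
- rewrite /= !sat_atoms => H1 H2; split => // p; rewrite H1 H2; tauto.
- rewrite !sat_chiS => -[A1 B1] [A2 B2]; split; first by move=> p; rewrite A1 A2; tauto.
  split.
  + move=> i u' Hu'; have [t' [Ht' Hs]] := (proj1 (B1 i)) u' Hu'.
    have [v' [Hv' Hs']] := (proj2 (B2 i)) t' Ht'.
    exists v'; split => //; exact: IH Hs Hs'.
  + move=> i v' Hv'; have [t' [Ht' Hs]] := (proj1 (B2 i)) v' Hv'.
    have [u' [Hu' Hs']] := (proj2 (B1 i)) t' Ht'.
    exists u'; split => //; exact: IH Hs' Hs.
Qed.

Lemma nbisim_chi {Phi I : finType} n (M N : kmodel Phi I) (u : world M) (v : world N) t :
  nbisimw n u v -> sat u (chi Phi I n t) -> sat v (chi Phi I n t).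
Proof.
elim: n M N u v t => [|m IH] M N u v t.
- rewrite /= !sat_atoms => -[H1 _] H2 p; rewrite -H1; exact: H2.
- rewrite !sat_chiS => -[H0 [Hf Hb]] [A1 B1]; split; first by move=> p; rewrite -H0; exact: A1.
  move=> i; split.
  + move=> v' Hv'; have [u' [Hu' Hb']] := Hb i v' Hv'.
    have [t' [Ht' Hs]] := (proj1 (B1 i)) u' Hu'.
    exists t'; split => //; exact: IH Hb' Hs.
  + move=> t' Ht'; have [u' [Hu' Hs]] := (proj2 (B1 i)) t' Ht'.
    have [v' [Hv' Hb']] := Hf i u' Hu'.
    exists v'; split => //; exact: IH Hb' Hs.
Qed.

Fixpoint depth {Phi I : Type} (f : form Phi I) : nat :=
  match f with
  | Var _ => 0
  | Bot => 0
  | Imp f g => maxn (depth f) (depth g)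
  | Box _ g => (depth g).+1
  end.

Lemma nbisim_sat {Phi I : Type} (f : form Phi I) n (M N : kmodel Phi I) (u : world M) (v : world N) :
  nbisimw n u v -> depth f <= n -> (sat u f <-> sat v f).
Proof.
elim: f n M N u v => [p|| f IHf g IHg | i g IH] n M N u v.
- by case: n => [|n] [H _] _ /=.
- by [].
- move=> H; rewrite /= geq_max => /andP [Hf Hg].
  rewrite (IHf n M N u v H Hf) (IHg n M N u v H Hg); tauto.
- case: n => [|m] //= [_ [Hf Hb]] Hd; split.
  + move=> Hs v' Hv'; have [u' [Hu' Hb']] := Hb i v' Hv'.
    by apply/(IH m M N u' v' Hb' Hd); apply: Hs.
  + move=> Hs u' Hu'; have [v' [Hv' Hb']] := Hf i u' Hu'.
    by apply/(IH m M N u' v' Hb' Hd); apply: Hs.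
Qed.

Lemma nbisim_refl {Phi I : Type} n (M : kmodel Phi I) (u : world M) : nbisimw n u u.
Proof.
elim: n u => [|m IH] u /=; first by split.
split => //; split => i u' H; exists u'; split => //.
Qed.

Lemma nbisim_sym {Phi I : Type} n (M N : kmodel Phi I) (u : world M) (v : world N) :
  nbisimw n u v -> nbisimw n v u.
Proof.
elim: n M N u v => [|m IH] M N u v /=.
- move=> [H _]; split => // p; by rewrite H.
- move=> [H [Hf Hb]]; split; first by move=> p; rewrite H.
  split.
  + move=> i v' Hv'; have [u' [Hu' B]] := Hb i v' Hv'; exists u'; split => //; exact: IH.
  + move=> i u' Hu'; have [v' [Hv' B]] := Hf i u' Hu'; exists v'; split => //; exact: IH.
Qed.

Theorem corollary27 (Phi I : finType) (Phi_ne : inhabited Phi) (I_ne : inhabited I)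
  (X : pointed Phi I -> Prop)
  (HX : forall x y, X x -> X y -> (modeq x y <-> bisimilar x y))
  (L : form Phi I -> Prop) (HL : normal_logic L) (Hsound : sound_wrt L X) :
  forall U : quot X -> Prop, bisim_open U <-> stone_open U.
Proof.
move=> U; split.
- move=> HU c Uc; have [b [[x [n [Xx Eb]]] [bc hsub]]] := HU c Uc.
  subst b; have [t Ht] := @chi_exists Phi I n (projT1 x) (projT2 x).
  exists (fun c => exists y, proj1_sig c y /\ psat y (chi Phi I n t)); split.
  + by exists (chi Phi I n t).
  split.
  + have [y [cy hy]] := bc; exists y; split => //.
    rewrite /psat; move: hy; rewrite /nbisim => hy.
    exact: (nbisim_chi _ _ _ _ _ _ (nbisim_sym _ _ _ _ _ hy) Ht).
  + move=> s [z [sz hz]]; apply: hsub; exists z; split => //.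
    rewrite /nbisim; exact: (chi_nbisim _ _ _ _ _ _ hz Ht).
- move=> HU c Uc; have [b [[f Eb] [bc hsub]]] := HU c Uc.
  subst b; have [y [cy hy]] := bc.
  have Xy : X y.
    move: cy; case: c {Uc hsub bc} => C [x0 [Xx0 EC]] /=; rewrite EC; by case.
  exists (fun c => exists z, proj1_sig c z /\ nbisim (depth f) z y); split.
  + by exists y, (depth f).
  split.
  + exists y; split => //; exact: nbisim_refl.
  + move=> s [z [sz hz]]; apply: hsub; exists z; split => //.
    by apply/(nbisim_sat _ _ _ _ _ _ hz (leqnn _)).
Qed.
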